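(* Let $\mathbb{F}$ be a finite field. For every $k\in\mathbb{N}$ there exists a CMSO formula $\mathrm{LinCom}(\langle Z\rangle,\langle Y^1\rangle,\dots,\langle Y^k\rangle)$ over $\Sigma_{\mathbb{F}}$ such that for every matrix $A$ over $\mathbb{F}$ and all virtual columns $\langle L\rangle,\langle J^1\rangle,\dots,\langle J^k\rangle$ of $\mathcal{S}(A)$ we have $\mathcal{S}(A)\models\mathrm{LinCom}(\langle L\rangle,\langle J^1\rangle,\dots,\langle J^k\rangle)$ if and only if $v(\langle L\rangle)\in\mathrm{span}(v(\langle J^1\rangle),\dots,v(\langle J^k\rangle))$.
   Context: $\Sigma_{\mathbb{F}}$ has unary symbols $R,C$ and binary symbols $\mathrm{Entry}_\alpha$ ($\alpha\in\mathbb{F}$). For a matrix $A$ with rows $r_1,\dots,r_m$, $\mathcal{S}(A)$ has universe rows $\cup$ columns, $R$ = rows, $C$ = columns, $\mathrm{Entry}_\alpha=\{(r,c):A(r,c)=\alpha\}$. CMSO is monadic second-order logic with predicates $\mathrm{mod}_{a,b}(X)$ meaning $|X|\equiv a\pmod b$. A virtual column of $\mathcal{S}(A)$ is a family $\langle Q\rangle=\{Q_\alpha\}_{\alpha\in\mathbb{F}}$ of pairwise disjoint sets of rows whose union is the set of all rows; its vector $v(\langle Q\rangle)\in\mathbb{F}^m$ has $i$-th coordinate $\alpha$ where $r_i\in Q_\alpha$. In formulas, a virtual column variable $\langle Z\rangle$ is an $\mathbb{F}$-indexed tuple of set variables $\{Z_\alpha\}_{\alpha\in\mathbb{F}}$.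 *)

(* Defs.v *)
From HB Require Import structures.
From mathcomp Require Import all_boot all_order all_algebra all_field.
Set Implicit Arguments. Unset Strict Implicit. Unset Printing Implicit Defensive.
Import GRing.Theory.
Local Open Scope ring_scope.

(* ---------- Syntax of CMSO over Sigma_F ----------
   First-order variables and set variables are both indexed by nat
   (two separate name spaces). *)
Inductive cmso (F : Type) : Type :=
| CR    (x : nat)
| CC    (x : nat)
| CEntry (a : F) (x y : nat)
| CEq   (x y : nat)
| CIn   (x X : nat)
| CMod  (a b X : nat)
| CNot  (f : cmso F)
| CAnd  (f g : cmso F)
| CEx1  (x : nat) (f : cmso F)
| CEx2  (X : nat) (f : cmso F).

Definition univ (m n : nat) : finType := ('I_m + 'I_n)%type.

Definition is_row m n (u : univ m n) : bool := if u is inl _ then true else false.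
Definition is_col m n (u : univ m n) : bool := if u is inr _ then true else false.

Definition entry_rel (F : eqType) m n (A : 'M[F]_(m, n)) (a : F)
  (u v : univ m n) : bool :=
  match u, v with
  | inl i, inr j => A i j == a
  | _, _ => false
  end.

Definition upd (T : Type) (f : nat -> T) (x : nat) (t : T) : nat -> T :=
  fun y => if y == x then t else f y.

(* Satisfaction, with a first-order assignment (None = unassigned; atoms on
   unassigned variables are false) and a set assignment. *)
Fixpoint sat (F : eqType) m n (A : 'M[F]_(m, n)) (phi : cmso F)
  (nu : nat -> option (univ m n)) (sigma : nat -> {set univ m n}) : Prop :=
  match phi with
  | CR x => if nu x is Some u then is_row u else False
  | CC x => if nu x is Some u then is_col u else False
  | CEntry a x y =>
      match nu x, nu y with Some u, Some v => entry_rel A a u v | _, _ => False end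
  | CEq x y => match nu x, nu y with Some u, Some v => u = v | _, _ => False end
  | CIn x X => if nu x is Some u then u \in sigma X else False
  | CMod a b X => #|sigma X| = a %[mod b]
  | CNot f => ~ sat A f nu sigma
  | CAnd f g => sat A f nu sigma /\ sat A g nu sigma
  | CEx1 x f => exists u : univ m n, sat A f (upd nu x (Some u)) sigma
  | CEx2 X f => exists S : {set univ m n}, sat A f nu (upd sigma X S)
  end.

Definition is_vcol (F : finType) m n (Q : F -> {set univ m n}) : Prop :=
  (forall a b : F, a != b -> [disjoint Q a & Q b]) /\
  \bigcup_(a : F) Q a = [set u : univ m n | is_row u].

Definition vcol_vec (F : finFieldType) m n (Q : F -> {set univ m n}) : 'rV[F]_m :=
  \row_(i < m) odflt 0 [pick a : F | inl i \in Q a].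

(* set-variable name for the a-component of the j-th virtual-column variable
   of LinCom (j = 0 : <Z>, j = i+1 : <Y^{i+1}>) *)
Definition vvar (F : finType) (j : nat) (a : F) : nat :=
  j * #|F| + enum_rank a.

(* Main.v *)
Require Import Defs.
From HB Require Import structures.
From mathcomp Require Import all_boot all_order all_algebra all_field.
From Stdlib Require Classical_Prop.
Local Open Scope ring_scope.
Import GRing.Theory.
Set Implicit Arguments. Unset Strict Implicit.

Section Aux.
Variable F : finFieldType.

Definition CTrue : cmso F := @CMod F 0%N 1%N 0%N.
Definition CImp (f g : cmso F) := CNot (CAnd f (CNot g)).
Definition CAll (x : nat) (f : cmso F) := CNot (CEx1 x (CNot f)).
Definition bigAnd (s : seq (cmso F)) := foldr (@CAnd F) CTrue s.
Definition bigOr (s : seq (cmso F)) := CNot (bigAnd (map (@CNot F) s)).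

Lemma sat_bigAnd (T : eqType) m n (A : 'M[F]_(m, n)) nu sigma (G : T -> cmso F) (l : seq T) :
  sat A (bigAnd (map G l)) nu sigma <-> (forall t, t \in l -> sat A (G t) nu sigma).
Proof.
elim: l => [|t l IH] /=.
  split=> // _. by rewrite /= modn1 mod0n.
split.
  move=> [H1 /IH H2] x; rewrite inE => /orP [/eqP -> //|]; exact: H2.
move=> H; split; first by apply: H; rewrite inE eqxx.
by apply/IH => x Hx; apply: H; rewrite inE Hx orbT.
Qed.

Lemma sat_bigAndT (T : finType) m n (A : 'M[F]_(m, n)) nu sigma (G : T -> cmso F) :
  sat A (bigAnd (map G (enum T))) nu sigma <-> (forall t, sat A (G t) nu sigma).
Proof.
split=> [/sat_bigAnd H t|H]; first by apply: H; rewrite mem_enum.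
by apply/sat_bigAnd => t _.
Qed.

Lemma sat_bigOrT (T : finType) m n (A : 'M[F]_(m, n)) nu sigma (G : T -> cmso F) :
  sat A (bigOr (map G (enum T))) nu sigma <-> (exists t, sat A (G t) nu sigma).
Proof.
rewrite /bigOr /= -map_comp; split.
  move=> H; apply: Classical_Prop.NNPP => H1; apply: H; apply/sat_bigAndT => t Ht; apply: H1; by exists t.
by move=> [t Ht] /sat_bigAndT H; exact: (H t).
Qed.

Lemma sat_Imp m n (A : 'M[F]_(m, n)) nu sigma f g :
  sat A (CImp f g) nu sigma <-> (sat A f nu sigma -> sat A g nu sigma).
Proof.
split => /= H.
  move=> Hf; apply: Classical_Prop.NNPP => Hg; exact: H.
by move=> [Hf Hg]; apply: Hg; exact: H.
Qed.

Lemma sat_All m n (A : 'M[F]_(m, n)) nu sigma x f :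
  sat A (CAll x f) nu sigma <-> (forall u, sat A f (upd nu x (Some u)) sigma).
Proof.
split => /= H.
  move=> u; apply: Classical_Prop.NNPP => Hn; apply: H; by exists u.
by move=> [u Hu]; apply: Hu.
Qed.

Lemma sat_In_upd m n (A : 'M[F]_(m, n)) nu sigma x X u :
  sat A (CIn F x X) (upd nu x (Some u)) sigma <-> u \in sigma X.
Proof. by rewrite /= /upd eqxx. Qed.

Lemma sat_R_upd m n (A : 'M[F]_(m, n)) nu sigma x u :
  sat A (CR F x) (upd nu x (Some u)) sigma <-> is_row u.
Proof. by rewrite /= /upd eqxx. Qed.

Lemma vcolP m n (Q : F -> {set univ m n}) (hQ : is_vcol Q) (r : 'I_m) a :
  (inl r \in Q a) = (vcol_vec Q 0 r == a).
Proof.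
rewrite mxE; case: pickP => [b Hb | H] /=.
  apply/idP/eqP => [Ha|<- //]; apply/eqP; apply: contraT => Hab.
  by rewrite (disjointFr (hQ.1 _ _ Hab) Hb) in Ha.
have : (inl r : univ m n) \in [set u : univ m n | is_row u] by rewrite inE.
by rewrite -hQ.2 => /bigcupP [b _ Hb]; rewrite H in Hb.
Qed.

End Aux.

Theorem lemma8 (F : finFieldType) (k : nat) :
  exists phi : cmso F,
  forall (m n : nat) (A : 'M[F]_(m, n))
         (L : F -> {set univ m n}) (J : 'I_k -> F -> {set univ m n}),
    is_vcol L -> (forall i, is_vcol (J i)) ->
    forall (nu : nat -> option (univ m n)) (sigma : nat -> {set univ m n}),
      (forall a : F, sigma (vvar 0 a) = L a) ->
      (forall (i : 'I_k) (a : F), sigma (vvar i.+1 a) = J i a) ->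
      (sat A phi nu sigma <->
       (vcol_vec L <= \matrix_(i < k) vcol_vec (J i))%MS).
Proof.
exists (bigOr (map (fun c : {ffun 'I_k -> F} =>
  CAll 0%N (CImp (@CR F 0%N) (bigAnd (map (fun f : {ffun 'I_k -> F} =>
     CImp (bigAnd (map (fun i : 'I_k => @CIn F 0%N (vvar i.+1 (f i))) (enum 'I_k)))
          (@CIn F 0%N (vvar 0%N (\sum_i c i * f i)))) (enum {ffun 'I_k -> F})))))
  (enum {ffun 'I_k -> F}))).
move=> m n A L J hL hJ nu sigma HL HJ.
have E : forall c : {ffun 'I_k -> F},
  sat A (CAll 0%N (CImp (@CR F 0%N) (bigAnd (map (fun f : {ffun 'I_k -> F} =>
     CImp (bigAnd (map (fun i : 'I_k => @CIn F 0%N (vvar i.+1 (f i))) (enum 'I_k)))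
          (@CIn F 0%N (vvar 0%N (\sum_i c i * f i)))) (enum {ffun 'I_k -> F}))))) nu sigma
  <-> (forall (r : 'I_m) (f : {ffun 'I_k -> F}), (forall i, inl r \in J i (f i)) ->
        inl r \in L (\sum_i c i * f i)).
  move=> c; split.
    move/sat_All => H r f Hf; move/sat_Imp: (H (inl r)) => /(_ isT) /sat_bigAndT /(_ f).
    move/sat_Imp => H1; apply: Classical_Prop.NNPP => Hn; apply: Hn.
    have := sat_In_upd A nu sigma 0 (vvar 0%N (\sum_i c i * f i)) (inl r).
    rewrite HL => <-; apply: H1.
    by apply/sat_bigAndT => i; apply/sat_In_upd; rewrite HJ; exact: Hf.
  move=> H; apply/sat_All => u; apply/sat_Imp => /sat_R_upd.
  case: u => // r _; apply/sat_bigAndT => f; apply/sat_Imp => /sat_bigAndT H3.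
  apply/sat_In_upd; rewrite HL; apply: H => i.
  by move/sat_In_upd: (H3 i); rewrite HJ.
split.
  move/sat_bigOrT=> [c /E Hc]; apply/submxP; exists (\row_i c i).
  apply/rowP => r; rewrite [RHS]mxE.
  apply/eqP; rewrite -vcolP //.
  have -> : \sum_j (\row_i c i) 0 j * (\matrix_(i < k) vcol_vec (J i)) j r
      = \sum_i c i * [ffun i => vcol_vec (J i) 0 r] i.
    by apply: eq_bigr => i _; rewrite ffunE !mxE.
  by apply: Hc => i; rewrite ffunE vcolP.
move/submxP => [D HD]; apply/sat_bigOrT; exists [ffun i => D 0 i]; apply/E => r f Hf.
rewrite vcolP // HD mxE; apply/eqP; apply: eq_bigr => i _.
rewrite ffunE [X in _ * X]mxE.
suff -> : vcol_vec (J i) 0 r = f i by [].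
by apply/eqP; rewrite -vcolP.
Qed.
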